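(* Let $L_1(x,y),\dots,L_k(x,y)$ be linear ordinary differential operators in $x$, $L_m(x,y)=\sum_{j=0}^{n_m} l_{m,j}(x,y)D_x^j$ with $l_{m,n_m}\not\equiv 0$, and put $N=\sum_{m=1}^k n_m+2k$. Then for every integer $p$ with $2p>N$ there exist functions $a_0,\dots,a_{p-1},b_0,\dots,b_{p-1}\in\mathcal K$, not all identically zero, such that the partial differential operator $$P=\sum_{i=0}^{p-1}a_i(x,y)D_y^iD_x+\sum_{i=0}^{p-1}b_i(x,y)D_y^i$$ satisfies $P\big(L_1(x,y)\varphi_1(x)+\dots+L_k(x,y)\varphi_k(x)\big)\equiv 0$ for all smooth functions $\varphi_1(x),\dots,\varphi_k(x)$. In particular (case $k=1$), for a single operator $L$ of order $n$ such $P$ exists whenever $p>(n+2)/2$.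
   Context: $\mathcal K$ denotes a differential field of functions of two variables $(x,y)$, all defined on a common open subset of $\mathbb R^2$ (e.g. $\mathbb Q(x,y)$), closed under $\partial_x$ and $\partial_y$. $D_x=d/dx$, $D_y=\partial/\partial y$. A linear ordinary differential operator (LODO) in $x$ is an operator $L(x,y)=\sum_{j=0}^n l_j(x,y)D_x^j$ with coefficients in $\mathcal K$; operators whose coefficients depend on $x$ only are written $R(x)$. The functions $\varphi_i(x)$ are arbitrary smooth functions of $x$ alone. *)

(* Defs.v *)
From HB Require Import structures.
From mathcomp Require Import all_boot all_order all_algebra.
Set Implicit Arguments. Unset Strict Implicit. Unset Printing Implicit Defensive.
Import Order.TTheory GRing.Theory Num.Theory.
Local Open Scope ring_scope.

Definition derivation (A : comNzRingType) (D : A -> A) : Prop :=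
  (forall u v : A, D (u + v) = D u + D v) /\
  (forall u v : A, D (u * v) = D u * v + u * D v).

(* Linear ordinary differential operator in x, with coefficients c j (j <= n)
   in K (embedded into the function ring A by iota), applied to u. *)
Definition lodo_apply (K : fieldType) (A : comNzRingType) (iota : K -> A)
  (Dx : A -> A) (n : nat) (c : nat -> K) (u : A) : A :=
  \sum_(j < n.+1) iota (c j) * iter j Dx u.

Definition P_apply (K : fieldType) (A : comNzRingType) (iota : K -> A)
  (Dx Dy : A -> A) (p : nat) (a b : 'I_p -> K) (u : A) : A :=
  \sum_(i < p) (iota (a i) * iter i Dy (Dx u) + iota (b i) * iter i Dy u).

(* Main.v *)
Require Import Defs.
From HB Require Import structures.
From mathcomp Require Import all_boot all_order all_algebra.
Import GRing.Theory.
Local Open Scope ring_scope.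
Set Implicit Arguments.
Lemma ker_ex (K : fieldType) k s (q : 'I_k -> nat) (B : forall m, 'M[K]_(s, q m)) :
  (\sum_m q m < s)%N -> exists2 v : 'rV[K]_s, v != 0 & forall m, v *m B m = 0.
Proof.
move=> hs; set M := \mxrow_m B m.
have : kermx M != 0.
  rewrite -mxrank_eq0 mxrank_ker subn_eq0 -ltnNge.
  exact: leq_ltn_trans (rank_leq_col M) hs.
case/rowV0Pn => v svK nz; exists v => // m.
have /sub_kermxP H := svK.
have := congr1 (fun X => submxrow X m) H.
rewrite /M mul_mxrow mxrowK => ->.
by apply/matrixP => i j; rewrite !mxE.
Qed.
Definition ev (A : comNzRingType) (K : fieldType) (iota : K -> A) (Dx : A -> A)
  k (phi : 'I_k -> A) (d : 'I_k -> nat) (c : 'I_k -> nat -> K) : A :=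
  \sum_(m < k) \sum_(j < d m) iota (c m j) * iter j Dx (phi m).
Arguments ev {A K} iota Dx {k} phi d c.

Lemma der0 (A : comNzRingType) (D : A -> A) : derivation D -> D 0 = 0.
Proof.
case=> hD _; have := hD 0 0; rewrite addr0 => /eqP.
by rewrite -subr_eq subrr eq_sym => /eqP.
Qed.

Lemma der_sum (A : comNzRingType) (D : A -> A) (I : Type) (r : seq I) (F : I -> A) :
  derivation D -> D (\sum_(i <- r) F i) = \sum_(i <- r) D (F i).
Proof.
move=> hD; apply: (big_morph D (fst hD)); exact: der0.
Qed.

Lemma iter_der0 (A : comNzRingType) (D : A -> A) j : derivation D -> iter j D 0 = 0.
Proof. by move=> hD; elim: j => //= j ->; apply: der0. Qed.

Lemma iter_comm (A : comNzRingType) (Dx Dy : A -> A) j x :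
  (forall u, Dx (Dy u) = Dy (Dx u)) -> Dy (iter j Dx x) = iter j Dx (Dy x).
Proof. by move=> hc; elim: j => //= j IH; rewrite -hc IH. Qed.

Definition cX (K : fieldType) (dx : K -> K) k (d : 'I_k -> nat) (c : 'I_k -> nat -> K) :=
  fun m j => (if (j < d m)%N then dx (c m j) else 0) + (if j is j'.+1 then c m j' else 0).
Arguments cX {K} dx {k} d c.

Definition pad (K : fieldType) k (d : 'I_k -> nat) (c : 'I_k -> nat -> K) :=
  fun m (j : nat) => if (j < d m)%N then c m j else 0.
Arguments pad {K} {k} d c.


Lemma ev_Dy (A : comNzRingType) (Dx Dy : A -> A) (hDx : derivation Dx) (hDy : derivation Dy)
  (hcomm : forall u : A, Dx (Dy u) = Dy (Dx u))
  (K : fieldType) (iota : {rmorphism K -> A}) (dy : K -> K)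
  (hdy : forall c : K, Dy (iota c) = iota (dy c))
  k (phi : 'I_k -> A) (hphi : forall m, Dy (phi m) = 0) d c :
  Dy (ev iota Dx phi d c) = ev iota Dx phi d (fun m j => dy (c m j)).
Proof.
rewrite /ev der_sum //; apply: eq_bigr => m _; rewrite der_sum //; apply: eq_bigr => j _.
by rewrite (snd hDy) hdy (@iter_comm _ Dx Dy j (phi m) hcomm) hphi iter_der0 // mulr0 addr0.
Qed.

Lemma ev_iterDy (A : comNzRingType) (Dx Dy : A -> A) (hDx : derivation Dx) (hDy : derivation Dy)
  (hcomm : forall u : A, Dx (Dy u) = Dy (Dx u))
  (K : fieldType) (iota : {rmorphism K -> A}) (dy : K -> K)
  (hdy : forall c : K, Dy (iota c) = iota (dy c))
  k (phi : 'I_k -> A) (hphi : forall m, Dy (phi m) = 0) d c i :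
  iter i Dy (ev iota Dx phi d c) = ev iota Dx phi d (fun m j => iter i dy (c m j)).
Proof. by elim: i => //= i IH; rewrite IH; apply: ev_Dy. Qed.

Lemma ev_Dx (A : comNzRingType) (Dx : A -> A) (hDx : derivation Dx)
  (K : fieldType) (iota : {rmorphism K -> A}) (dx : K -> K)
  (hdx : forall c : K, Dx (iota c) = iota (dx c))
  k (phi : 'I_k -> A) d c :
  Dx (ev iota Dx phi d c) = ev iota Dx phi (fun m => (d m).+1) (cX dx d c).
Proof.
rewrite /ev der_sum //; apply: eq_bigr => m _; rewrite der_sum //.
rewrite /cX. under [RHS]eq_bigr do rewrite rmorphD mulrDl.
rewrite big_split /= big_ord_recr /= ltnn rmorph0 mul0r addr0.
rewrite big_ord_recl /= rmorph0 mul0r add0r.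
rewrite -big_split /=; apply: eq_bigr => j _.
by rewrite ltn_ord (snd hDx) hdx.
Qed.

Lemma ev_pad (A : comNzRingType) (Dx : A -> A)
  (K : fieldType) (iota : {rmorphism K -> A}) k (phi : 'I_k -> A) d c :
  ev iota Dx phi (fun m => (d m).+1) (pad d c) = ev iota Dx phi d c.
Proof.
rewrite /ev; apply: eq_bigr => m _.
rewrite big_ord_recr /= /pad ltnn rmorph0 mul0r addr0.
by apply: eq_bigr => j _ /=; rewrite ltn_ord.
Qed.

Lemma ev_lin (A : comNzRingType) (Dx : A -> A)
  (K : fieldType) (iota : {rmorphism K -> A}) k (phi : 'I_k -> A) d p
  (w : 'I_p -> K) (C : 'I_p -> 'I_k -> nat -> K) :
  \sum_(i < p) iota (w i) * ev iota Dx phi d (C i) =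
  ev iota Dx phi d (fun m j => \sum_(i < p) w i * C i m j).
Proof.
rewrite /ev. under [RHS]eq_bigr do under eq_bigr do rewrite rmorph_sum mulr_suml.
under [LHS]eq_bigr do rewrite mulr_sumr.
rewrite exchange_big; apply: eq_bigr => m _.
under eq_bigr do rewrite mulr_sumr.
rewrite exchange_big; apply: eq_bigr => j _; apply: eq_bigr => i _.
by rewrite rmorphM mulrA.
Qed.

Lemma ev_add (A : comNzRingType) (Dx : A -> A)
  (K : fieldType) (iota : {rmorphism K -> A}) k (phi : 'I_k -> A) d c1 c2 :
  ev iota Dx phi d c1 + ev iota Dx phi d c2 =
  ev iota Dx phi d (fun m j => c1 m j + c2 m j).
Proof.
rewrite /ev -big_split; apply: eq_bigr => m _; rewrite -big_split.
by apply: eq_bigr => j _; rewrite rmorphD mulrDl.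
Qed.

Lemma ev0 (A : comNzRingType) (Dx : A -> A)
  (K : fieldType) (iota : {rmorphism K -> A}) k (phi : 'I_k -> A) d (c : 'I_k -> nat -> K) :
  (forall m (j : 'I_(d m)), c m (nat_of_ord j) = 0) -> ev iota Dx phi d c = 0.
Proof.
move=> h; rewrite /ev big1 // => m _; rewrite big1 // => j _.
by rewrite h rmorph0 mul0r.
Qed.

Unset Implicit Arguments.

Theorem mainTheorem1
  (A : comNzRingType) (Dx Dy : A -> A)
  (hDx : derivation Dx) (hDy : derivation Dy)
  (hcomm : forall u : A, Dx (Dy u) = Dy (Dx u))
  (K : fieldType) (iota : {rmorphism K -> A}) (dx dy : K -> K)
  (hdx : forall c : K, Dx (iota c) = iota (dx c))
  (hdy : forall c : K, Dy (iota c) = iota (dy c))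
  (k : nat) (n : 'I_k -> nat) (l : 'I_k -> nat -> K)
  (hlead : forall m : 'I_k, l m (n m) != 0)
  (p : nat) (hp : (\sum_(m < k) n m + 2 * k < 2 * p)%N) :
  exists a b : 'I_p -> K,
    (exists i : 'I_p, a i != 0 \/ b i != 0) /\
    forall phi : 'I_k -> A,
      (forall m : 'I_k, Dy (phi m) = 0) ->
      P_apply iota Dx Dy a b
        (\sum_(m < k) lodo_apply iota Dx (n m) (l m) (phi m)) = 0.
Proof.
pose D1 := fun m : 'I_k => (n m).+1.
pose D2 := fun m : 'I_k => (n m).+2.
pose X i m j := iter i dy (cX dx D1 l m j).
pose Y i m j := iter i dy (pad D1 l m j).
pose B m : 'M[K]_(p + p, D2 m) :=
  col_mx (\matrix_(i < p, j < D2 m) X i m j) (\matrix_(i < p, j < D2 m) Y i m j).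
have hs : (\sum_m D2 m < p + p)%N.
  rewrite /D2 (eq_bigr (fun m => n m + 2)%N); last by move=> m _; rewrite addn2.
  rewrite big_split /= sum_nat_const card_ord addnn -mul2n mulnC; exact: hp.
have [v nz hv] := @ker_ex _ _ _ _ B hs.
exists (fun i => v 0 (lshift p i)), (fun i => v 0 (rshift p i)); split.
  case: (boolP [exists i, (v 0 (lshift p i) != 0) || (v 0 (rshift p i) != 0)]).
    by case/existsP => i /orP hi; exists i.
  rewrite negb_exists => /forallP H; case/eqP: nz.
  apply/rowP => t; rewrite mxE -(splitK t); case: (split t) => i /=;
    by have := H i; rewrite negb_or !negbK => /andP [/eqP h1 /eqP h2]; rewrite ?h1 ?h2.
move=> phi hphi.
have hu : \sum_(m < k) lodo_apply iota Dx (n m) (l m) (phi m) = ev iota Dx phi D1 l by [].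
have e1 i : iter i Dy (Dx (ev iota Dx phi D1 l)) = ev iota Dx phi D2 (X i).
  by rewrite (@ev_Dx _ _ hDx _ iota dx hdx) (@ev_iterDy _ Dx Dy hDx hDy hcomm _ iota dy hdy _ phi hphi).
have e2 i : iter i Dy (ev iota Dx phi D1 l) = ev iota Dx phi D2 (Y i).
  by rewrite -(@ev_pad _ Dx _ iota _ phi D1 l) (@ev_iterDy _ Dx Dy hDx hDy hcomm _ iota dy hdy _ phi hphi).
rewrite /P_apply hu; under eq_bigr do rewrite e1 e2.
rewrite big_split /= !ev_lin ev_add; apply: ev0 => m j.
have := congr1 (fun M : 'M[K]_(1, D2 m) => M 0 j) (hv m).
rewrite /B -[v]hsubmxK mul_row_col !mxE.
move=> H; rewrite -[RHS]H; congr (_ + _); apply: eq_bigr => i _;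
  by rewrite ?row_mxEl ?row_mxEr !mxE.
Qed.
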